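(* Let $i\ge 3$ and $k\ge 3$ be integers, let $p$ be a nonnegative integer, and put $r=\lfloor (F_i-1)/F_k\rfloor$. If $r\ge p$ and $(r,p)\ne(0,0)$, then $$g_p(F_i,F_{i+2},F_{i+k})=\begin{cases}(F_i-rF_k-1)F_{i+2}+(r+p)F_{i+k}-F_i & \text{if } (F_i-rF_k)F_{i+2}\ge F_{k-2}F_i,\\ (F_k-1)F_{i+2}+(r+p-1)F_{i+k}-F_i & \text{if } (F_i-rF_k)F_{i+2}< F_{k-2}F_i.\end{cases}$$
   Context: Fibonacci numbers: $F_0=0$, $F_1=1$, $F_n=F_{n-1}+F_{n-2}$. For positive integers $a_1,\dots,a_l$ with $\gcd(a_1,\dots,a_l)=1$ and an integer $n$, let $d(n;a_1,\dots,a_l)$ be the number of tuples $(x_1,\dots,x_l)$ of nonnegative integers with $a_1x_1+\dots+a_lx_l=n$. For a nonnegative integer $p$, the $p$-Frobenius number $g_p(a_1,\dots,a_l)$ is the largest integer $n$ with $d(n;a_1,\dots,a_l)\le p$. *)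

(* Defs.v *)
From mathcomp Require Import all_boot all_order all_algebra.
Set Implicit Arguments. Unset Strict Implicit. Unset Printing Implicit Defensive.
Import Order.TTheory GRing.Theory Num.Theory.

Fixpoint fib (n : nat) : nat :=
  match n with
  | 0 => 0
  | 1 => 1
  | (m.+1 as k).+1 => fib k + fib m
  end.

(* d(n; a1,a2,a3) for a natural number n: number of triples (x1,x2,x3) of
   nonnegative integers with a1 x1 + a2 x2 + a3 x3 = n (all entries are
   bounded by n when the a_j are positive). *)
Definition dnat3 (a1 a2 a3 n : nat) : nat :=
  \sum_(x1 < n.+1) \sum_(x2 < n.+1) \sum_(x3 < n.+1)
     (a1 * x1 + a2 * x2 + a3 * x3 == n).

Definition d3 (a1 a2 a3 : nat) (n : int) : nat :=
  match n with
  | Posz m => dnat3 a1 a2 a3 m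
  | Negz _ => 0
  end.

Definition is_p_frobenius (p a1 a2 a3 : nat) (g : int) : Prop :=
  (d3 a1 a2 a3 g <= p)%N /\ (forall n : int, (g < n)%R -> (p < d3 a1 a2 a3 n)%N).

(* Main.v *)
Set Warnings "-notation-overridden,-ambiguous-paths".
Require Import Defs.
From mathcomp Require Import all_boot all_order all_algebra zify ring.
Import Order.TTheory GRing.Theory Num.Theory.

Lemma fibSS n : fib n.+2 = fib n.+1 + fib n.
Proof. by []. Qed.

Lemma fib_add m n : fib (m + n).+1 = fib m.+1 * fib n.+1 + fib m * fib n.
Proof.
elim/ltn_ind: m => -[|[|m]] IH.
- rewrite add0n /=; lia.
- rewrite add1n /=; lia.
have E : (m.+2 + n).+1 = (m.+1 + n).+1.+1 by [].
rewrite E fibSS (IH m.+1) // (_ : (m.+1 + n) = (m + n).+1) // IH // !fibSS; lia.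
Qed.

Lemma fib_mono n : fib n <= fib n.+1.
Proof. by case: n => // n; rewrite fibSS leq_addr. Qed.

Lemma fib_pos n : 0 < n -> 0 < fib n.
Proof.
elim: n => // -[|n] // IH _; rewrite fibSS; have := IH erefl; lia.
Qed.

Lemma fib_bezout n : exists u v : int, (u * (fib n)%:Z + v * (fib n.+1)%:Z = 1)%R.
Proof.
elim: n => [|n [u [v H]]]; first by exists 0%R, 1%R.
exists (v - u)%R, u; rewrite fibSS PoszD; lia.
Qed.

Section Count.
Variables (a1 a2 a3 n : nat).
Let T := 'I_n.+1.
Definition S3 := [set t : T * (T * T) | a1 * t.1 + a2 * t.2.1 + a3 * t.2.2 == n].

Lemma dnat3_card : dnat3 a1 a2 a3 n = #|S3|.
Proof.
rewrite /dnat3.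
rewrite (eq_bigr (fun x1 : T => \sum_(p : T * T) ((a1 * x1 + a2 * p.1 + a3 * p.2 == n) : nat))); last first.
  by move=> x1 _; rewrite pair_bigA.
rewrite pair_bigA -sum1_card [RHS]big_mkcond /=; apply: eq_bigr => t _.
by rewrite inE; case: (_ == _).
Qed.

Lemma dnat3_ge (L : seq (nat * (nat * nat))) : uniq L ->
  (forall t, t \in L -> a1 * t.1 + a2 * t.2.1 + a3 * t.2.2 = n) ->
  0 < a1 -> 0 < a2 -> 0 < a3 ->
  size L <= dnat3 a1 a2 a3 n.
Proof.
move=> uL HL h1 h2 h3.
have bnd t : t \in L -> [/\ t.1 < n.+1, t.2.1 < n.+1 & t.2.2 < n.+1].
  move=> /HL; case: t => x [y z] /= E; split; nia.
pose h (t : nat * (nat * nat)) : T * (T * T) := (inord t.1, (inord t.2.1, inord t.2.2)).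
have uL' : uniq (map h L).
  rewrite map_inj_in_uniq // => -[x [y z]] [x' [y' z']] /bnd [/= b1 b2 b3] /bnd [/= b1' b2' b3'].
  rewrite /h /= => -[] /(congr1 (@nat_of_ord _)) + /(congr1 (@nat_of_ord _)) + /(congr1 (@nat_of_ord _)).
  by rewrite !inordK // => -> -> ->.
rewrite dnat3_card -(size_map h) -(card_uniqP uL').
apply: subset_leq_card; apply/subsetP => t /mapP [[x [y z]] tL ->].
have [/= b1 b2 b3] := bnd _ tL.
rewrite inE /= !inordK //; apply/eqP; exact: (HL _ tL).
Qed.

Lemma dnat3_le (p : nat) (X Y : nat -> nat) :
  (forall x y z, a1 * x + a2 * y + a3 * z = n -> z < p /\ x = X z /\ y = Y z) ->
  dnat3 a1 a2 a3 n <= p.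
Proof.
move=> H.
pose h (j : 'I_p) : T * (T * T) := (inord (X j), (inord (Y j), inord j)).
rewrite dnat3_card.
suff sub : S3 \subset h @: [set: 'I_p].
  apply: (leq_trans (subset_leq_card sub)); apply: (leq_trans (leq_imset_card _ _)).
  by rewrite cardsT card_ord.
apply/subsetP => -[x [y z]]; rewrite inE /= => /eqP /H [zp [Ex Ey]].
apply/imsetP; exists (Ordinal zp); first by rewrite inE.
rewrite /h /=; congr pair; [|congr pair]; apply: val_inj; rewrite /= inordK //;
  by rewrite -?Ex -?Ey.
Qed.
End Count.

Local Open Scope ring_scope.

Lemma sdec {a b e f u v x y z y0 m : int} : 0 < a ->
  u * a + v * b = 1 ->
  a * x + b * y + (f * b - e * a) * z = b * y0 + a * m ->
  exists s, y = y0 + s * a - f * z /\ x = m - b * s + e * z.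
Proof.
move=> a0 hb E.
pose D := y + f * z - y0; pose F := m + e * z - x.
have bD : b * D = a * F by rewrite /D /F; lia.
have Da : D = a * (u * D + v * F).
  transitivity ((u * a + v * b) * D); first by rewrite hb mul1r.
  rewrite mulrDl -!mulrA bD; ring.
move: Da; set s := u * D + v * F => Da.
exists s; split; first by move: Da; rewrite /D; lia.
have : a * (F - b * s) = 0.
  rewrite mulrBr -bD Da; ring.
move/eqP; rewrite mulf_eq0 => /orP [/eqP a00|/eqP]; first by lia.
rewrite /F; lia.
Qed.

Lemma s_range {a b e f y0 m x y z s : int} :
  0 < a -> 1 <= e -> 2 * e <= f -> 2 * a <= b ->
  0 <= y0 < a -> 0 <= x -> 0 <= y -> 0 <= z ->
  y = y0 + s * a - f * z -> x = m - b * s + e * z -> m < b ->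
  s = 0 \/ s = 1.
Proof.
move=> a0 e1 ef ab /andP [y00 y0a] x0 y_0 z0 Ey Ex mb.
have s0 : 0 <= s.
  case: (lerP 0 s) => // sn.
  have : s * a <= - a by nia.
  nia.
case: (lerP s 1) => s1; first by lia.
have h1 : f * z <= y0 + s * a by lia.
have h2 : f * (b * s - e * z) >= f * b * s - e * (y0 + s * a) by nia.
have h3 : f * b * s - e * (y0 + s * a) >= f * b by nia.
have : b * s - e * z >= b by nia.
lia.
Qed.

Lemma mulK_le {e x y : int} : 0 < e -> e * x <= e * y -> x <= y.
Proof. nia. Qed.
Lemma mulK_lt {e x y : int} : 0 < e -> e * x < e * y -> x < y.
Proof. nia. Qed.
Lemma mul_le {e x y : int} : 0 <= e -> x <= y -> e * x <= e * y.
Proof. nia. Qed.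

Lemma mul_S {f x y : int} : 0 <= f -> x < y -> f * (x + 1) <= f * y.
Proof. nia. Qed.

Section Main.
Variables (a b e f r al p u v : int).
Hypotheses (a0 : 0 < a) (e1 : 1 <= e) (ef : 2 * e <= f) (ab : 2 * a <= b)
  (Ha : a = r * f + al) (al1 : 1 <= al) (alf : al <= f) (r1 : 1 <= r)
  (p0 : 0 <= p) (pr : p <= r) (bez : u * a + v * b = 1).

Let c := f * b - e * a.

Definition G := if e * a <= al * b then (al - 1) * b + (r + p) * c - a
                else (f - 1) * b + (r + p - 1) * c - a.
Definition y0A := if e * a <= al * b then (if p == 0 then a - 1 else p * f - 1)
                  else (if p == 0 then r * f - 1 else p * f - al - 1).
Definition mA := if e * a <= al * b then (if p == 0 then - e * r - 1 else b - e * (p + r) - 1)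
                 else (if p == 0 then - e * (r - 1) - 1 else b - e * (p + r - 1) - 1).

Lemma GA : G = b * y0A + a * mA.
Proof.
rewrite /G /y0A /mA /c; case: ifP => _; case: eqP => [->|_]; rewrite Ha; ring.
Qed.

Lemma partA x y z : 0 <= x -> 0 <= y -> 0 <= z ->
  a * x + b * y + c * z = G -> z < p /\ x = mA + e * z /\ y = y0A - f * z.
Proof.
move=> x0 y_0 z0 E.
have [s [Ey Ex]] := sdec a0 bez (etrans E GA : a * x + b * y + (f * b - e * a) * z = _).
have y0r : 0 <= y0A < a.
  rewrite /y0A; case: ifP => C; case: eqP => P0; apply/andP; split; try nia.
  have : 2 * al < e by nia.
  nia.
have mb : mA < b by rewrite /mA; case: ifP => _; case: eqP => _; nia.
have [s0|s1] := s_range a0 e1 ef ab y0r x0 y_0 z0 Ey Ex mb.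
  rewrite s0 mul0r addr0 in Ey; rewrite s0 mulr0 subr0 in Ex.
  split; last by split; lia.
  have e0 : 0 < e by lia.
  have f0 : 0 < f by lia.
  move: Ey Ex y_0 x0; rewrite /y0A /mA; case: ifP => C; case: eqP => P0 Ey Ex y_0 x0.
  - have h : e * r < e * z by lia.
    have := mulK_lt e0 h => h2.
    have := mul_S (ltW f0) h2; lia.
  - apply: (mulK_lt f0); lia.
  - have h : e * (r - 1) < e * z by lia.
    have := mulK_lt e0 h => h2.
    have := mul_S (ltW f0) h2; lia.
  - apply: (mulK_lt f0); lia.
exfalso; rewrite s1 mul1r in Ey; rewrite s1 mulr1 in Ex.
have e0 : 0 < e by lia.
have f0 : 0 < f by lia.
have fb : 4 * e * a <= f * b by nia.
move: Ey Ex y_0 x0; rewrite /y0A /mA; case: ifP => C; case: eqP => P0 Ey Ex y_0 x0.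
- have h1 : f * (b + e * r + 1) <= f * (e * z) by apply: mul_le; lia.
  have h2 : e * (f * z) <= e * (2 * a - 1) by apply: mul_le; lia.
  nia.
- have h : e * (p + r) < e * z by lia.
  have := mulK_lt e0 h => h2.
  have := mul_S (ltW f0) h2; lia.
- have h1 : f * (b + e * (r - 1) + 1) <= f * (e * z) by apply: mul_le; lia.
  have h2 : e * (f * z) <= e * (2 * a - 1) by apply: mul_le; lia.
  nia.
- have h : e * (p + r - 1) < e * z by lia.
  have := mulK_lt e0 h => h2.
  have := mul_S (ltW f0) h2; lia.
Qed.

Lemma fb4 : 4 * e * a <= f * b.
Proof. nia. Qed.

Lemma cae : 0 <= c - a * e.
Proof. have := fb4; rewrite /c; lia. Qed.

Lemma q_le_r {q rho : int} : 0 <= rho -> q * f + rho < a -> q <= r.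
Proof.
move=> r0 qa; have f0 : 0 < f by lia.
have : f * q < f * (r + 1) by lia.
move/(mulK_lt f0); lia.
Qed.

Lemma K0 {q rho : int} : 0 <= q -> 0 <= rho < f -> q * f + rho < a -> p <= q ->
  b * (q * f + rho) + a * (- (e * (q - p))) <= G + a.
Proof.
move=> q0 /andP [r0 rf] qa pq.
have qr := q_le_r r0 qa.
have ca := cae.
have p_ca : 0 <= p * (c - a * e) by apply: mulr_ge0.
have [qr'|qr'] := eqVneq q r.
  have rl : rho <= al - 1 by move: qa; rewrite qr'; lia.
  have t1 : 0 <= b * (al - 1 - rho) by apply: mulr_ge0; lia.
  have t2 : 0 <= b * (f - al) by apply: mulr_ge0; lia.
  case C: (e * a <= al * b).
    have -> : G + a = b * (q * f + rho) + a * (- (e * (q - p))) + (b * (al - 1 - rho) + p * (c - a * e)).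
      rewrite /G C /c qr' Ha; ring.
    lia.
  have -> : G + a = b * (q * f + rho) + a * (- (e * (q - p))) + (b * (al - 1 - rho) + p * (c - a * e) + (e * a - al * b)).
    rewrite /G C /c qr' Ha; ring.
  lia.
have qr1 : q <= r - 1 by lia.
have t1 : 0 <= (r - q - 1) * c by apply: mulr_ge0; rewrite /c; have := fb4; lia.
have t2 : 0 <= b * (f - 1 - rho) by apply: mulr_ge0; lia.
case C: (e * a <= al * b).
  have -> : G + a = b * (q * f + rho) + a * (- (e * (q - p))) + ((r - q - 1) * c + p * (c - a * e) + b * (f - 1 - rho) + (al * b - e * a)).
    rewrite /G C /c Ha; ring.
  lia.
have -> : G + a = b * (q * f + rho) + a * (- (e * (q - p))) + (b * (f - 1 - rho) + (r - 1 - q) * c + p * (c - a * e)).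
  rewrite /G C /c Ha; ring.
lia.
Qed.

Lemma K1 {q rho Z1 : int} : 0 <= q -> 0 <= rho < f -> q * f + rho < a -> q < p ->
  f * Z1 <= q * f + rho + a < f * Z1 + f ->
  b * (q * f + rho) + a * (b - e * (Z1 + q + 1 - p)) <= G + a.
Proof.
move=> q0 /andP [r0 rf] qa pq /andP [z1 z2].
have f0 : 0 < f by lia.
have Zlo : q + r <= Z1.
  have : f * (q + r) < f * (Z1 + 1) by rewrite Ha in z2; lia.
  move/(mulK_lt f0); lia.
have Zhi : Z1 <= q + r + 1.
  have : f * Z1 < f * (q + r + 2) by rewrite Ha in z1; lia.
  move/(mulK_lt f0); lia.
have ca := cae.
have t0 : 0 <= (p - q - 1) * (c - a * e) by apply: mulr_ge0; lia.
have [Zd|Zd] : Z1 = q + r \/ Z1 = q + r + 1 by lia.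
  have rl : rho + al < f by rewrite Zd Ha in z2; lia.
  have t1 : 0 <= b * (f - 1 - rho - al) by apply: mulr_ge0; lia.
  case C: (e * a <= al * b).
    have -> : G + a = b * (q * f + rho) + a * (b - e * (Z1 + q + 1 - p)) + ((p - q - 1) * (c - a * e) + b * (f - 1 - rho - al) + (al * b - e * a)).
      rewrite /G C /c Zd Ha; ring.
    lia.
  have -> : G + a = b * (q * f + rho) + a * (b - e * (Z1 + q + 1 - p)) + (b * (f - 1 - rho - al) + (p - q - 1) * (c - a * e)).
    rewrite /G C /c Zd Ha; ring.
  lia.
have t1 : 0 <= b * (f - 1 - rho) by apply: mulr_ge0; lia.
case C: (e * a <= al * b).
  have -> : G + a = b * (q * f + rho) + a * (b - e * (Z1 + q + 1 - p)) + ((p - q - 1) * (c - a * e) + b * (f - 1 - rho)).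
    rewrite /G C /c Zd Ha; ring.
  lia.
have -> : G + a = b * (q * f + rho) + a * (b - e * (Z1 + q + 1 - p)) + ((p - q - 1) * (c - a * e) + b * (f - 1 - rho) + (a * e - al * b)).
  rewrite /G C /c Zd Ha; ring.
lia.
Qed.

Definition T0 (m y0 z : int) : int * (int * int) := (m + e * z, (y0 - f * z, z)).
Definition T1 (m y0 z : int) : int * (int * int) := (m - b + e * z, (y0 + a - f * z, z)).

Definition good (n : int) (t : int * (int * int)) :=
  [/\ 0 <= t.1, 0 <= t.2.1, 0 <= t.2.2 & a * t.1 + b * t.2.1 + c * t.2.2 = n].

Lemma partB (n : int) : G < n ->
  exists L, [/\ uniq L, size L = (`|p| + 1)%N & forall t, t \in L -> good n t].
Proof.
move=> Gn.
have f0 : 0 < f by lia.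
pose y0 := ((v * n) %% a)%Z; pose t := ((v * n) %/ a)%Z.
have y00 : 0 <= y0 by apply: modz_ge0; lia.
have y0a : y0 < a by apply: ltz_pmod.
have vn : v * n = t * a + y0 := divz_eq _ _.
pose m := u * n + b * t.
have En : n = b * y0 + a * m.
  have y0e : y0 = v * n - t * a by rewrite vn; ring.
  rewrite /m y0e; transitivity ((u * a + v * b) * n); first by rewrite bez mul1r.
  ring.
pose q := (y0 %/ f)%Z; pose rho := (y0 %% f)%Z.
have r0 : 0 <= rho by apply: modz_ge0; lia.
have rf : rho < f by apply: ltz_pmod.
have q0 : 0 <= q by rewrite divz_ge0.
have Ey0 : y0 = q * f + rho := divz_eq _ _.
pose Z1 := ((y0 + a) %/ f)%Z.
have EZ : y0 + a = Z1 * f + ((y0 + a) %% f)%Z := divz_eq _ _.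
have y0a' : q * f + rho < a by rewrite -Ey0.
have Z1a : f * Z1 <= q * f + rho + a < f * Z1 + f.
  have := modz_ge0 (y0 + a) (lt0r_neq0 f0); have := ltz_pmod (y0 + a) f0.
  rewrite -Ey0; lia.
have key M : b * y0 + a * M <= G + a -> M <= m.
  move=> H; have : a * M < a * (m + 1) by lia.
  by move/(mulK_lt a0); lia.
have [qn Eq] : exists qn : nat, q = qn by exists `|q|%N; lia.
have [pn Ep] : exists pn : nat, p = pn by exists `|p|%N; lia.
have eqn : forall j, good n (T0 m y0 j) <->
    (0 <= m + e * j /\ 0 <= y0 - f * j /\ 0 <= j).
  move=> j; rewrite /good /T0 /=; split; first by case.
  move=> [h1 [h2 h3]]; split=> //; rewrite En /c; ring.
have eqn1 : forall j, good n (T1 m y0 j) <->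
    (0 <= m - b + e * j /\ 0 <= y0 + a - f * j /\ 0 <= j).
  move=> j; rewrite /good /T1 /=; split; first by case.
  move=> [h1 [h2 h3]]; split=> //; rewrite En /c; ring.
have [pq|qp] := lerP p q.
  have := K0 q0 (introT andP (conj r0 rf)) y0a' pq; rewrite -Ey0 => /key Mm.
  exists [seq T0 m y0 j%:Z | j <- iota (qn - pn) pn.+1]; split.
  - rewrite map_inj_uniq ?iota_uniq // => j j' [] _ _ [] //.
  - rewrite size_map size_iota; lia.
  move=> x /mapP [j]; rewrite mem_iota => /andP [j1 j2] ->.
  apply/eqn; split; last split; last by lia.
  - have : e * (q - p) <= e * j by apply: mul_le; lia.
    lia.
  - have : f * j <= f * q by apply: mul_le; lia.
    lia.
pose Z0 := Z1 + q + 1 - p.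
have Zlo : q + r <= Z1.
  have : f * (q + r) < f * (Z1 + 1) by move: Z1a; rewrite Ha; lia.
  move/(mulK_lt f0); lia.
have Zhi : Z1 <= q + r + 1.
  have : f * Z1 < f * (q + r + 2) by move: Z1a; rewrite Ha; lia.
  move/(mulK_lt f0); lia.
have [zn Ez] : exists zn : nat, Z0 = zn by exists `|Z0|%N; lia.
have := K1 q0 (introT andP (conj r0 rf)) y0a' qp Z1a; rewrite -Ey0 => /key Mm.
have eZ0 : e * Z0 <= b.
  have : e * Z0 <= e * (2 * r) by apply: mul_le; lia.
  have : r * (2 * e) <= r * f by apply: mul_le; lia.
  lia.
exists ([seq T0 m y0 j%:Z | j <- iota 0 qn.+1] ++ [seq T1 m y0 j%:Z | j <- iota zn (pn - qn)]); split.
- rewrite cat_uniq !map_inj_uniq ?iota_uniq //; last first.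
    by move=> j j' [] _ _ [].
    by move=> j j' [] _ _ [].
  rewrite andbT; apply/hasPn => x /mapP [j]; rewrite mem_iota => /andP [j1 j2] ->.
  apply/mapP => -[j']; rewrite mem_iota => /andP [j1' j2'] [] _ _ E.
  lia.
- rewrite size_cat !size_map !size_iota; lia.
move=> x; rewrite mem_cat => /orP [] /mapP [j]; rewrite mem_iota => /andP [j1 j2] ->.
  apply/eqn; split; last split; last by lia.
  - have : 0 <= e * j by apply: mulr_ge0; lia.
    rewrite /Z0 in eZ0; lia.
  - have : f * j <= f * q by apply: mul_le; lia.
    lia.
apply/eqn1; split; last split; last by lia.
- have : e * Z0 <= e * j by apply: mul_le; lia.
  rewrite /Z0 in Mm *; lia.
- have : f * j <= f * Z1 by apply: mul_le; lia.
  lia.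
Qed.
End Main.


Theorem theorem5 (i k p : nat) (hi : (3 <= i)%N) (hk : (3 <= k)%N) :
  let r := ((fib i - 1) %/ fib k)%N in
  (p <= r)%N -> (r, p) != (0%N, 0%N) ->
  is_p_frobenius p (fib i) (fib (i + 2)) (fib (i + k))
    (if ((fib i - r * fib k) * fib (i + 2) >= fib (k - 2) * fib i)%N
     then ((fib i - r * fib k - 1)%N%:Z * (fib (i + 2))%:Z
           + (r + p)%N%:Z * (fib (i + k))%:Z - (fib i)%:Z)
     else ((fib k - 1)%N%:Z * (fib (i + 2))%:Z
           + (r + p)%:Z * (fib (i + k))%:Z - (fib (i + k))%:Z - (fib i)%:Z)).
Proof.
case: k hk => [|[|K]] hk //.
have Ek : (K.+2 - 2 = K)%N by lia.
rewrite Ek.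
move=> r pr rp.
have K1 : (1 <= K)%N by lia.
have fK := fib_pos _ K1.
have fiS : fib (i + 2) = fib i.+1 + fib i by rewrite addn2 fibSS.
have fkS : fib K.+2 = fib K.+1 + fib K by [].
have fKm := fib_mono K.
have fim := fib_mono i.
have ai : (0 < fib i)%N by apply: fib_pos; lia.
have fc : fib (i + K.+2) = (fib K.+2 * fib i.+1 + fib K.+1 * fib i)%N.
  by rewrite -fib_add; congr fib; lia.
have rel : (fib K.+2 * fib (i + 2) = fib (i + K.+2) + fib K * fib i)%N.
  rewrite fiS fc fkS; nia.
have r1 : (1 <= r)%N.
  case: r rp pr => // /=; case: p => //.
have rfa : (r * fib K.+2 <= fib i - 1)%N by rewrite /r; apply: leq_divM.
have rfa2 : (fib i - 1 < r.+1 * fib K.+2)%N by rewrite /r; apply: ltn_ceil; lia.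
have [u [v bz]] := fib_bezout i.
have bez : (u - v) * (fib i)%:Z + v * (fib (i + 2))%:Z = 1.
  rewrite fiS PoszD; move: bz; lia.
set al := (fib i - r * fib K.+2)%N.
have Hal : (fib i = r * fib K.+2 + al)%N by rewrite /al; lia.
pose A := (fib i)%:Z; pose B := (fib (i + 2))%:Z; pose E := (fib K)%:Z.
pose F := (fib K.+2)%:Z; pose R := r%:Z; pose AL := al%:Z; pose P := p%:Z.
have a0 : 0 < A by rewrite /A; lia.
have e1 : 1 <= E by rewrite /E; lia.
have ef : 2 * E <= F by rewrite /E /F fkS; lia.
have ab : 2 * A <= B by rewrite /A /B fiS; lia.
have Ha : A = R * F + AL by rewrite /A /R /F /AL Hal PoszD PoszM.
have al1 : 1 <= AL by rewrite /AL /al; lia.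
have alf : AL <= F by rewrite /AL /al /F; lia.
have r1' : 1 <= R by rewrite /R; lia.
have p0 : 0 <= P by rewrite /P; lia.
have pr' : P <= R by rewrite /P /R; lia.
have cZ : (fib (i + K.+2))%:Z = F * B - E * A.
  rewrite /F /B /E /A; move: rel; lia.
have Ceq : (fib K * fib i <= al * fib (i + 2))%N = (E * A <= AL * B).
  by rewrite /E /A /AL /B -!PoszM lez_nat.
have HG : (if (fib K * fib i <= al * fib (i + 2))%N
     then ((al - 1)%N%:Z * (fib (i + 2))%:Z
           + (r + p)%N%:Z * (fib (i + K.+2))%:Z - (fib i)%:Z)
     else ((fib K.+2 - 1)%N%:Z * (fib (i + 2))%:Z
           + (r + p)%:Z * (fib (i + K.+2))%:Z - (fib (i + K.+2))%:Z - (fib i)%:Z))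
     = G A B E F R AL P.
  rewrite /G Ceq cZ; case: ifP => _.
    rewrite /AL /B /R /P /A; lia.
  rewrite /F /B /R /P /A; lia.
rewrite HG.
have fb4 : 4 * E * A <= F * B.
  have h1 : B * (2 * E) <= B * F by apply: mul_le; lia.
  have h2 : E * (2 * A) <= E * B by apply: mul_le; lia.
  lia.
have EA : A <= E * A.
  have : A * 1 <= A * E by apply: mul_le; lia.
  lia.
have G0 : 0 <= G A B E F R AL P.
  have t1 : 0 <= (R + P - 1) * (F * B - E * A) by apply: mulr_ge0; lia.
  have t2 : 0 <= (AL - 1) * B by apply: mulr_ge0; lia.
  have t3 : 0 <= (F - 2) * B by apply: mulr_ge0; lia.
  rewrite /G; case: ifP => _; lia.
have [g Eg] : exists g : nat, G A B E F R AL P = g by exists `|G A B E F R AL P|%N; lia.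
rewrite Eg; split.
  rewrite /d3 /=.
  pose Xf (z : nat) : int := mA A B E R AL P + E * z%:Z.
  pose Yf (z : nat) : int := y0A A B E F R AL P - F * z%:Z.
  have := @dnat3_le (fib i) (fib (i + 2)) (fib (i + K.+2)) g p (fun z => absz (Xf z)) (fun z => absz (Yf z)).
  apply.
  move=> x y z Exyz.
  have Ei : A * x + B * y + (F * B - E * A) * z = G A B E F R AL P.
    by rewrite Eg -cZ /A /B -!PoszM -!PoszD Exyz.
  have x0 : 0 <= x%:Z by []. have y0' : 0 <= y%:Z by []. have z0 : 0 <= z%:Z by [].
  have [zp [Ex Ey]] := @partA A B E F R AL P (u - v) v a0 e1 ef ab Ha al1 alf r1' p0 pr' bez x y z
     x0 y0' z0 Ei.
  split; first by rewrite /P in zp; lia.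
  by split; rewrite /Xf /Yf; lia.
move=> [n|n] Gn; last by rewrite -Eg in Gn; lia.
have [L [uL sL gL]] := @partB A B E F R AL P (u - v) v a0 e1 ef ab Ha al1 alf r1' p0 pr' bez n (ltac:(by rewrite Eg)).
rewrite /d3 /=.
pose h (t : int * (int * int)) : nat * (nat * nat) := (absz t.1, (absz t.2.1, absz t.2.2)).
have nn t : t \in L -> [/\ 0 <= t.1, 0 <= t.2.1, 0 <= t.2.2
    & A * t.1 + B * t.2.1 + (F * B - E * A) * t.2.2 = n].
  by move/gL; rewrite /good.
have := @dnat3_ge (fib i) (fib (i + 2)) (fib (i + K.+2)) n (map h L).
rewrite size_map sL /P absz_nat addn1; apply.
- rewrite map_inj_in_uniq // => -[x [y z]] [x' [y' z']] /nn [/= h1 h2 h3 _] /nn [/= h1' h2' h3' _].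
  rewrite /h /= => -[] E1 E2 E3.
  by congr (_, (_, _)); lia.
- move=> t /mapP [[x [y z]] /nn [/= h1 h2 h3 Et] ->] /=.
  move: Et; rewrite -cZ /A /B; lia.
- by [].
- by apply: fib_pos; lia.
- by apply: fib_pos; lia.
Qed.
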